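(* There exist constants $c>0$ and $N_0$ such that for every $N\ge N_0$ that is a power of two there exists an interval graph $G=(V,E)$ with $|V|=N$ nodes satisfying the following. When the nodes are labeled $v_0,\dots,v_{N-1}$ in increasing order of the left endpoints of their intervals, the minimal $\pi$-OBDD representing $\chi_E$ has at least $c\,N\log N$ nodes, where $\pi$ is the $2$-interleaved variable order with decreasing significance.
   Context: An interval graph on $N$ nodes is given by intervals $[a_i,b_i]$ with $a_i<b_i$, $0\le i\le N-1$; two distinct nodes are adjacent iff their intervals intersect. Without loss of generality all $2N$ endpoints are distinct, so the left endpoints determine a unique labeling $v_0,\dots,v_{N-1}$ with $a_0<a_1<\dots<a_{N-1}$. Let $n=\lceil\log_2 N\rceil$. For $x=(x_0,\dots,x_{n-1})\in\{0,1\}^n$ put $|x|=\sum_{i=0}^{n-1}x_i2^i$. The characteristic function $\chi_E:\{0,1\}^{2n}\to\{0,1\}$ is defined by $\chi_E(x,y)=1$ iff $|x|,|y|<N$ and $\{v_{|x|},v_{|y|}\}\in E$. A $\pi$-OBDD for a variable order $\pi$ (a linear order of the input variables) is a directed acyclic rooted graph with two sinks labeled $0$ and $1$. Every inner node is labeled by a variable and has two outgoing edges labeled $0$ and $1$, and along every edge the variables respect $\pi$. An assignment determines a path from the root by following, at each node labeled $x_i$, the edge labeled by the value of $x_i$. The OBDD represents $f$ if this path always ends in the sink labeled $f(\text{assignment})$. The size of an OBDD is its number of nodes. The $2$-interleaved variable order with decreasing significance on $x,y\in\{0,1\}^n$ is $(x_{n-1},y_{n-1},x_{n-2},y_{n-2},\dots,x_0,y_0)$.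 *)

(* Defs.v *)
From HB Require Import structures.
From mathcomp Require Import all_boot all_order all_algebra.
Set Implicit Arguments. Unset Strict Implicit. Unset Printing Implicit Defensive.

(* An interval graph on N nodes: node i has interval [a i, b i] (only i < N
   matters).  Endpoints are natural numbers (only their relative order
   matters, so this is no loss of generality). *)
Definition interval_rep (N : nat) (a b : nat -> nat) : Prop :=
  [/\ (forall i j, i < j -> j < N -> a i < a j),
      (forall i, i < N -> a i < b i),
      (forall i j, i < N -> j < N -> a i != b j) &
      (forall i j, i < N -> j < N -> i != j -> b i != b j)].

Definition iadj (a b : nat -> nat) (i j : nat) : bool :=
  [&& i != j, a i <= b j & a j <= b i].

(* input variables x_0..x_{n-1} (inl) and y_0..y_{n-1} (inr) *)
Definition var (n : nat) := ('I_n + 'I_n)%type.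

Definition bval (n : nat) (x : 'I_n -> bool) : nat :=
  \sum_(i < n) (x i : nat) * 2 ^ i.

Definition chiE (N n : nat) (a b : nat -> nat) (asg : var n -> bool) : bool :=
  let X := bval (fun i => asg (inl i)) in
  let Y := bval (fun i => asg (inr i)) in
  [&& X < N, Y < N & iadj a b X Y].

Inductive onode (n s : nat) :=
| Sink of bool
| Inner of var n & 'I_s & 'I_s. (* label, 0-successor, 1-successor *)

Record obdd (n : nat) := Obdd {
  osize : nat;
  okind : 'I_osize -> onode n osize;
  oroot : 'I_osize }.
Arguments osize {n} _.
Arguments okind {n} _ _.
Arguments oroot {n} _.
Arguments Sink {n s} c.
Arguments Inner {n s} v lo hi.

(* A variable order pi is given by its rank function (position in pi). *)

Definition is_pi_obdd (n : nat) (rk : var n -> nat) (B : obdd n) : Prop :=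
  [/\ (forall u v lo hi, okind B u = Inner v lo hi ->
         forall w, (w = lo \/ w = hi) ->
         forall v' lo' hi', okind B w = Inner v' lo' hi' -> rk v < rk v'),
      (exists u0, okind B u0 = Sink false),
      (exists u1, okind B u1 = Sink true) &
      (forall u w c d, okind B u = Sink c ->
                       okind B w = Sink d -> c = d -> u = w)].

Fixpoint oeval (n : nat) (B : obdd n) (asg : var n -> bool) (fuel : nat)
  (u : 'I_(osize B)) : option bool :=
  match fuel with
  | 0 => None
  | k.+1 => match okind B u with
            | Sink c => Some c
            | Inner v lo hi => @oeval n B asg k (if asg v then hi else lo)
            end
  end.

(* B represents f: the path from the root ends in the sink labelled f(asg).
   The path is acyclic, so it has at most (osize B) nodes. *)
Definition represents (n : nat) (B : obdd n) (f : (var n -> bool) -> bool) :=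
  forall asg, @oeval n B asg (osize B) (oroot B) = Some (f asg).

(* 2-interleaved order with decreasing significance:
   x_{n-1}, y_{n-1}, x_{n-2}, y_{n-2}, ..., x_0, y_0 *)
Definition interleaved_rank (n : nat) (v : var n) : nat :=
  match v with
  | inl i => (n.-1 - i).*2
  | inr i => (n.-1 - i).*2.+1
  end.

(* Main.v *)
Require Import Defs.
From HB Require Import structures.
From mathcomp Require Import all_boot all_order all_algebra.
From mathcomp Require Import zify lra.
Set Implicit Arguments. Unset Strict Implicit. Unset Printing Implicit Defensive.


Section Generic.
Variables (n : nat) (rk : var n -> nat) (B : obdd n).
Hypothesis HB : is_pi_obdd rk B.
Local Notation ev := (@oeval n B).

Definition comb (l : nat) (al ga : var n -> bool) : var n -> bool :=
  fun v => if rk v < l then al v else ga v.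

Fixpoint walk (l : nat) (asg : var n -> bool) (k : nat) (u : 'I_(osize B)) :=
  match k with
  | 0 => u
  | k'.+1 => match okind B u with
             | Inner v lo hi => if rk v < l then walk l asg k' (if asg v then hi else lo) else u
             | Sink _ => u
             end
  end.

Definition okn (t : nat) (u : 'I_(osize B)) : bool :=
  match okind B u with Sink _ => true | Inner v _ _ => t <= rk v end.

Lemma okn_le t t' u : t' <= t -> okn t u -> okn t' u.
Proof. rewrite /okn; case: (okind B u) => // v _ _ H1 H2; exact: leq_trans H1 H2. Qed.

Lemma okn_next u v lo hi w : okind B u = Inner v lo hi -> (w = lo \/ w = hi) -> okn (rk v).+1 w.
Proof.
move=> Hu Hw; rewrite /okn; case Hk: (okind B w) => [c|v' lo' hi'] //.
case: HB => H _ _ _; exact: (H u v lo hi Hu w Hw v' lo' hi' Hk).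
Qed.

Lemma ite_or (b : bool) (lo hi : 'I_(osize B)) : (if b then hi else lo) = lo \/ (if b then hi else lo) = hi.
Proof. by case: b; [right|left]. Qed.

Lemma walk_read l a1 a2 k u : (forall v, rk v < l -> a1 v = a2 v) ->
  walk l a1 k u = walk l a2 k u.
Proof.
move=> H; elim: k u => [|k IH] u //=.
case: (okind B u) => // v lo hi; case: ifP => // Hv; by rewrite H // IH.
Qed.

Lemma walk_eval l a k u F c : ev a F u = Some c ->
  exists F', ev a F' (walk l a k u) = Some c.
Proof.
elim: k u F => [|k IH] u F H /=; first by exists F.
move: H; case: F => [|F] //=; case Hk: (okind B u) => [c'|v lo hi] H.
  by exists F.+1; rewrite /= Hk.
case: ifP => _; first exact: (IH _ _ H).
by exists F.+1; rewrite /= Hk.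
Qed.

Lemma walk_ok l a k u t : okn t u -> okn (minn l (t + k)) (walk l a k u).
Proof.
elim: k u t => [|k IH] u t /=.
  by rewrite addn0 => H; apply: okn_le H; apply: geq_minr.
case Hu: (okind B u) => [c|v lo hi] H.
  by rewrite /okn Hu.
case: ifP => Hv.
  have Hw := okn_next (w := if a v then hi else lo) Hu (ite_or (a v) lo hi).
  have Ht : t <= rk v by move: H; rewrite /okn Hu.
  rewrite -addSnnS; apply: IH; apply: okn_le Hw; by [].
rewrite /okn Hu; apply: leq_trans (geq_minl _ _) _; by rewrite leqNgt Hv.
Qed.

Lemma eval_ignore t a1 a2 F u : (forall v, t <= rk v -> a1 v = a2 v) -> okn t u ->
  ev a1 F u = ev a2 F u.
Proof.
move=> Ha; elim: F u => [|F IH] u //= Hu.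
case Hk: (okind B u) => [c|v lo hi] //.
have Hv : t <= rk v by move: Hu; rewrite /okn Hk.
rewrite Ha //; apply: IH.
apply: okn_le (okn_next Hk (ite_or (a2 v) lo hi)).
exact: leq_trans Hv _.
Qed.

Lemma oeval_mono a F F' u c : F <= F' -> ev a F u = Some c -> ev a F' u = Some c.
Proof.
elim: F F' u => [|F IH] [|F'] u //= HF.
case: (okind B u) => // v lo hi; exact: IH.
Qed.

Lemma same_val t a1 a2 u F1 F2 c1 c2 : (forall v, t <= rk v -> a1 v = a2 v) -> okn t u ->
  ev a1 F1 u = Some c1 -> ev a2 F2 u = Some c2 -> c1 = c2.
Proof.
move=> Ha Hu H1 H2.
have {}H1 := oeval_mono (leq_maxl F1 F2) H1.
have {}H2 := oeval_mono (leq_maxr F1 F2) H2.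
rewrite (@eval_ignore t a1 a2 (maxn F1 F2) u Ha Hu) H2 in H1; by case: H1.
Qed.

Variable f : (var n -> bool) -> bool.
Hypothesis Hrep : represents B f.

Definition node l al := walk l al l (oroot B).

Lemma node_eval l al ga : exists F, ev (comb l al ga) F (node l al) = Some (f (comb l al ga)).
Proof.
have [F HF] := walk_eval l l (Hrep (comb l al ga)).
exists F; rewrite /node (walk_read _ (a2 := comb l al ga)) //.
by move=> v Hv; rewrite /comb Hv.
Qed.

Lemma node_ok l al : okn l (node l al).
Proof.
have := @walk_ok l al l (oroot B) 0 ltac:(by rewrite /okn; case: okind).
by rewrite add0n minnn.
Qed.

Definition rkof (u : 'I_(osize B)) : option nat :=
  match okind B u with Inner v _ _ => Some (rk v) | Sink _ => None end.

Lemma node_rank l al :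
  (exists ga ga', (forall v, rk v != l -> ga v = ga' v) /\ f (comb l al ga) != f (comb l al ga')) ->
  rkof (node l al) = Some l.
Proof.
move=> [ga [ga' [Hg Hne]]].
have Hok := node_ok l al.
suff H : ~~ okn l.+1 (node l al).
  move: H Hok; rewrite /rkof /okn; case: okind => // v _ _.
  by rewrite -ltnNge ltnS => H1 H2; congr Some; apply/eqP; rewrite eqn_leq H1 H2.
apply/negP => Hok1.
have [F1 H1] := node_eval l al ga; have [F2 H2] := node_eval l al ga'.
move/eqP: Hne; apply; apply: (same_val (t := l.+1) _ Hok1 H1 H2).
move=> v Hv; rewrite /comb; case: ifP => // _; apply: Hg.
by rewrite neq_ltn Hv orbT.
Qed.

Lemma node_inj l a1 a2 ga : f (comb l a1 ga) != f (comb l a2 ga) -> node l a1 != node l a2.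
Proof.
move=> Hne; apply/eqP => Heq.
have [F1 H1] := node_eval l a1 ga; have [F2 H2] := node_eval l a2 ga.
rewrite Heq in H1.
move/eqP: Hne; apply; apply: (same_val (t := l) _ (node_ok l a2) H1 H2).
by move=> v Hv; rewrite /comb ltnNge Hv.
Qed.

Lemma sum_indic_le1 (E : nat) (lev : nat -> nat) (x : option nat) :
  (forall e1 e2, e1 < E -> e2 < E -> lev e1 = lev e2 -> e1 = e2) ->
  \sum_(e < E) (x == Some (lev e) : nat) <= 1.
Proof.
move=> Hinj.
case: (pickP [pred e : 'I_E | x == Some (lev e)]) => [e0 He0|Hn]; last first.
  by rewrite big1 // => e _; move: (Hn e) => /= ->.
rewrite (bigD1 e0) //= big1 ?addn0 ?leq_b1 // => e He.
apply/eqP; rewrite eqb0; apply/negP => /eqP He'.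
move: He0 => /= /eqP; rewrite He' => -[] /(Hinj _ _ (ltn_ord _) (ltn_ord _)) /val_inj Hee.
by rewrite Hee eqxx in He.
Qed.

Lemma generic_bound (E : nat) (lev : nat -> nat) (K : nat -> nat)
  (g : nat -> nat -> var n -> bool) :
  (forall e1 e2, e1 < E -> e2 < E -> lev e1 = lev e2 -> e1 = e2) ->
  (forall e i1 i2, e < E -> i1 < K e -> i2 < K e -> i1 != i2 ->
     exists ga, f (comb (lev e) (g e i1) ga) != f (comb (lev e) (g e i2) ga)) ->
  (forall e i, e < E -> i < K e ->
     exists ga ga', (forall v, rk v != lev e -> ga v = ga' v) /\
        f (comb (lev e) (g e i) ga) != f (comb (lev e) (g e i) ga')) ->
  \sum_(e < E) K e <= osize B.
Proof.
move=> Hinj Hfool Hdep.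
pose A (e : nat) := [set u : 'I_(osize B) | rkof u == Some (lev e)].
apply: (@leq_trans (\sum_(e < E) #|A e|)).
  apply: leq_sum => e _.
  pose h (i : 'I_(K e)) := node (lev e) (g e i).
  have Hh : injective h.
    move=> i1 i2 Heq; apply/eqP; apply/negP => /negP Hne.
    have [ga Hga] := Hfool e i1 i2 (ltn_ord e) (ltn_ord i1) (ltn_ord i2) Hne.
    by move: (node_inj Hga); rewrite /h in Heq; rewrite Heq eqxx.
  rewrite -[X in X <= _]card_ord -(card_imset _ Hh); apply: subset_leq_card.
  apply/subsetP => u /imsetP [i _ ->]; rewrite inE /h node_rank //.
  exact: Hdep (ltn_ord e) (ltn_ord i).
apply: (@leq_trans (\sum_(u : 'I_(osize B)) 1)); last by rewrite sum1_card card_ord.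
have -> : \sum_(e < E) #|A e| = \sum_(e < E) \sum_(u : 'I_(osize B)) (rkof u == Some (lev e) : nat).
  apply: eq_bigr => e _; rewrite -sum1_card; rewrite big_mkcond /=.
  by apply: eq_bigr => u _; rewrite inE; case: (_ == _).
rewrite exchange_big /=; apply: leq_sum => u _; exact: sum_indic_le1.
Qed.

End Generic.

Definition bit (X i : nat) : bool := odd (X %/ 2 ^ i).

Definition asg_of (n X Y : nat) : var n -> bool :=
  fun v => match v with inl i => bit X i | inr i => bit Y i end.

Lemma bval_bits n X : bval (fun i : 'I_n => bit X i) = X %% 2 ^ n.
Proof.
rewrite /bval; elim: n => [|n IH]; first by rewrite big_ord0 modn1.
rewrite big_ord_recr /= IH /bit.
set q := X %/ 2 ^ n.
have HX : X = q./2 * 2 ^ n.+1 + (odd q * 2 ^ n + X %% 2 ^ n).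
  rewrite {1}(divn_eq X (2 ^ n)) -/q {1}(esym (odd_double_half q)) expnS.
  rewrite -mul2n; lia.
have Hlt : odd q * 2 ^ n + X %% 2 ^ n < 2 ^ n.+1.
  have := ltn_pmod X (expn_gt0 2 n); rewrite expnS; case: (odd q); lia.
have -> : X %% 2 ^ n.+1 = odd q * 2 ^ n + X %% 2 ^ n.
  by rewrite [in LHS]HX modnMDl modn_small.
lia.
Qed.

Lemma bit_lo j P x i : x < 2 ^ j -> i < j -> bit (P * 2 ^ j + x) i = bit x i.
Proof.
move=> Hx Hi; rewrite /bit -(subnK (ltnW Hi)) expnD mulnA divnMDl ?expn_gt0 //.
rewrite oddD oddM oddX /=; case: (j - i) (subn_gt0 i j) => [|k]; first by rewrite Hi.
by move=> _; rewrite andbF.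
Qed.

Lemma bit_hi j P x i : x < 2 ^ j -> j <= i -> bit (P * 2 ^ j + x) i = bit (P * 2 ^ j) i.
Proof.
move=> Hx Hi; rewrite /bit -(subnK Hi) expnD [2 ^ (i - j) * _]mulnC !divnMA divnMDl ?expn_gt0 //.
by rewrite (divn_small Hx) addn0 mulnK ?expn_gt0.
Qed.

Lemma bits_eq n b b' : b < 2 ^ n -> b' < 2 ^ n ->
  (forall k, k < n -> bit b k = bit b' k) -> b = b'.
Proof.
elim: n b b' => [|n IH] b b'; first by rewrite expn0; case: b; case: b'.
move=> Hb Hb' H.
have H0 := H 0 isT; rewrite /bit expn0 !divn1 in H0.
have Hh : b./2 = b'./2.
  apply: IH; rewrite -?divn2; first by rewrite ltn_divLR // -expnSr.
    by rewrite ltn_divLR // -expnSr.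
  by move=> k Hk; rewrite /bit -!divnMA -expnS; exact: H.
by rewrite -(odd_double_half b) -(odd_double_half b') H0 Hh.
Qed.

Lemma bit_pow j i : bit (2 ^ j) i = (i == j).
Proof.
rewrite /bit; case: (ltngtP i j) => Hij.
- rewrite -(subnK (ltnW Hij)) expnD mulnK ?expn_gt0 // oddX.
  by case: (j - i) (subn_gt0 i j) => [|k]; [rewrite Hij|].
- by rewrite divn_small // ltn_exp2l.
- by rewrite Hij divnn expn_gt0.
Qed.

Lemma bit0n i : bit 0 i = false.
Proof. by rewrite /bit div0n. Qed.

Lemma pow_ge q : 6 <= q -> 8 * q + 6 <= 2 ^ q.
Proof.
elim: q => [|q IH] //; rewrite leq_eqVlt => /orP [/eqP <- //|Hq].
have := IH Hq; rewrite expnS; lia.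
Qed.

Definition k0 (n : nat) := n %/ 4.
Definition hh (n : nat) := n.-1 %/ 2.
Definition good (n X : nat) : bool :=
  ~~ odd X || bit (X %/ 2 ^ k0 n) ((X %% 2 ^ k0 n) %/ 2).
Definition rr (n X : nat) : nat :=
  if (X < 2 ^ n.-1) && good n X then 2 ^ n.-1 + (X %% 2 ^ hh n).+1 * 2 ^ hh n - 1 else X.
Definition Cc (n : nat) := (2 ^ n).+1.
Definition aa (n i : nat) := i * Cc n.
Definition bb (n i : nat) := rr n i * Cc n + i.+1.

Lemma rr_ge n X : X <= rr n X.
Proof.
rewrite /rr; case: ifP => // /andP [H _].
have := expn_gt0 2 (hh n); move: H; set L := 2 ^ hh n; set A := (X %% L).+1.
have HAL : 0 < A * L by rewrite muln_gt0 /= expn_gt0.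
move=> HX _; set AL := A * L in HAL *; lia.
Qed.

Lemma iadj_rr n X Y : X < Y -> Y < 2 ^ n -> iadj (aa n) (bb n) X Y = (Y <= rr n X).
Proof.
move=> HXY HY; rewrite /iadj /aa /bb /Cc.
have HrY := rr_ge n Y; have HrX := rr_ge n X.
have -> : (X != Y) = true by apply/eqP; lia.
have -> : X * (2 ^ n).+1 <= rr n Y * (2 ^ n).+1 + Y.+1 = true.
  apply: leq_trans (leq_addr _ _); rewrite leq_mul2r; apply/orP; right; lia.
rewrite /=; apply/idP/idP => H.
  rewrite leqNgt; apply/negP => H2.
  have : (rr n X).+1 * (2 ^ n).+1 <= Y * (2 ^ n).+1 by rewrite leq_mul2r H2 orbT.
  rewrite mulSn; move: H; set Z := rr n X * _; set W := Y * _; lia.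
apply: leq_trans (leq_addr _ _); rewrite leq_mul2r H orbT //.
Qed.

Lemma interval_rep_ok n : interval_rep (2 ^ n) (aa n) (bb n).
Proof.
rewrite /aa /bb /Cc; split.
- by move=> i j Hij _; rewrite ltn_mul2r Hij.
- move=> i _; have := rr_ge n i => Hr.
  apply: (@leq_ltn_trans (rr n i * (2 ^ n).+1)); first by rewrite leq_mul2r Hr orbT.
  by rewrite -addn1 leq_add2l.
- move=> i j Hi Hj; apply/eqP => H.
  have H1 : (i * (2 ^ n).+1) %% (2 ^ n).+1 = (rr n j * (2 ^ n).+1 + j.+1) %% (2 ^ n).+1 by rewrite H.
  rewrite modnMl modnMDl (@modn_small j.+1) in H1; last by rewrite ltnS.
  discriminate H1.
- move=> i j Hi Hj Hij; apply/eqP => H.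
  have H1 : (rr n i * (2 ^ n).+1 + i.+1) %% (2 ^ n).+1 = (rr n j * (2 ^ n).+1 + j.+1) %% (2 ^ n).+1 by rewrite H.
  rewrite !modnMDl (@modn_small j.+1) ?ltnS // (@modn_small i.+1) ?ltnS // in H1.
  by move: Hij; rewrite (succn_inj H1) eqxx.
Qed.

Lemma chiE_ext N n a b (a1 a2 : var n -> bool) : (forall v, a1 v = a2 v) ->
  @chiE N n a b a1 = @chiE N n a b a2.
Proof.
move=> H; rewrite /chiE.
have -> : bval (fun i => a1 (inl i)) = bval (fun i => a2 (inl i)).
  by apply: eq_bigr => i _; rewrite H.
have -> : bval (fun i => a1 (inr i)) = bval (fun i => a2 (inr i)).
  by apply: eq_bigr => i _; rewrite H.
by [].
Qed.

Lemma chiE_asg n X Y : X < 2 ^ n -> Y < 2 ^ n ->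
  @chiE (2 ^ n) n (aa n) (bb n) (@asg_of n X Y) = iadj (aa n) (bb n) X Y.
Proof.
move=> HX HY; rewrite /chiE /asg_of /=.
by rewrite !bval_bits !modn_small // HX HY.
Qed.

Lemma arith1 T A t x y L : y < L ->
  (T + (A + t) * L + y <= T + (A + x).+1 * L - 1) = (t <= x).
Proof.
move=> HyL; rewrite !mulnDl mulSn.
case: (leqP t x) => H.
  have : t * L <= x * L by rewrite leq_mul2r H orbT.
  set tL := t * L; set xL := x * L; set AL := A * L; lia.
have : x * L + L <= t * L by rewrite addnC -mulSn leq_mul2r H orbT.
set tL := t * L; set xL := x * L; set AL := A * L; lia.
Qed.

Section Level.
Variables n j : nat.
Hypothesis Hj3 : 3 <= j.
Hypothesis Hjh : j <= hh n.

Definition uof P := P %% 2 ^ (hh n - j).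
Definition Qof P t := 2 ^ (n.-1 - j) + (uof P * 2 ^ j + t) * 2 ^ (hh n - j).

Lemma hh_lt : hh n + hh n <= n.-1.
Proof. rewrite /hh; lia. Qed.

Lemma E1 : 2 ^ n.-1 = 2 ^ (n.-1 - j) * 2 ^ j.
Proof. by rewrite -expnD subnK //; move: hh_lt Hjh; lia. Qed.

Lemma E2 : 2 ^ hh n = 2 ^ (hh n - j) * 2 ^ j.
Proof. by rewrite -expnD subnK. Qed.

Lemma val_lem P x y t : P < 2 ^ (n.-1 - j) -> x < 2 ^ j -> y < 2 ^ j -> t < 2 ^ j ->
  [/\ P * 2 ^ j + x < 2 ^ n, Qof P t * 2 ^ j + y < 2 ^ n &
  iadj (aa n) (bb n) (P * 2 ^ j + x) (Qof P t * 2 ^ j + y) = good n (P * 2 ^ j + x) && (t <= x)].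
Proof.
move=> HP Hx Hy Ht.
have Hu : uof P < 2 ^ (hh n - j) by rewrite /uof ltn_pmod // expn_gt0.
have HAg : forall z, z < 2 ^ j -> uof P * 2 ^ j + z < 2 ^ hh n.
  move=> z Hz; rewrite E2; apply: (@leq_trans ((uof P).+1 * 2 ^ j)); first by rewrite mulSn; lia.
  by rewrite leq_mul2r Hu orbT.
have HA := HAg t Ht.
have HLL : 2 ^ hh n * 2 ^ hh n <= 2 ^ n.-1 by rewrite -expnD leq_exp2l // hh_lt.
have HjL : 2 ^ j <= 2 ^ hh n by rewrite leq_exp2l.
have HQ : Qof P t * 2 ^ j = 2 ^ n.-1 + (uof P * 2 ^ j + t) * 2 ^ hh n.
  by rewrite /Qof mulnDl -mulnA -E2 -E1.
have HX : P * 2 ^ j + x < 2 ^ n.-1.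
  rewrite E1; apply: (@leq_trans (P.+1 * 2 ^ j)); first by rewrite mulSn; lia.
  by rewrite leq_mul2r HP orbT.
have Hn : 2 ^ n = 2 ^ n.-1 + 2 ^ n.-1.
  by rewrite addnn -mul2n -expnS prednK //; move: hh_lt Hjh Hj3; lia.
have HAL : (uof P * 2 ^ j + t) * 2 ^ hh n + y < 2 ^ n.-1.
  apply: (@leq_trans ((uof P * 2 ^ j + t).+1 * 2 ^ hh n)).
    by rewrite mulSn; move: Hy HjL; lia.
  apply: leq_trans HLL; by rewrite leq_mul2r HA orbT.
have HY : Qof P t * 2 ^ j + y < 2 ^ n by rewrite HQ Hn; lia.
split => //; first by rewrite Hn; lia.
rewrite iadj_rr //; last by rewrite HQ; lia.
rewrite /rr HX /=.
have Hmod : (P * 2 ^ j + x) %% 2 ^ hh n = uof P * 2 ^ j + x.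
  rewrite {1}(divn_eq P (2 ^ (hh n - j))) mulnDl -mulnA -E2 -addnA modnMDl modn_small //.
  exact: HAg.
case: (good n _) => /=; last by rewrite HQ; apply/negbTE; rewrite -ltnNge; lia.
by rewrite Hmod HQ arith1 //; lia.
Qed.

End Level.

Section Level2.
Variables n j : nat.
Hypothesis Hj3 : 3 <= j.
Hypothesis Hjh : j <= hh n.
Hypothesis Hjk : k0 n < j.
Hypothesis HM : 2 * n <= 2 ^ k0 n.

Local Notation rk := (@interleaved_rank n).
Local Notation f := (@chiE (2 ^ n) n (aa n) (bb n)).
Definition lev := (n - j).*2.
Definition W := 2 ^ (j - 2) - 1.
Definition Pof i := i %/ W.
Definition tof i := 2 * (i %% W) + 2.
Definition Kl := 2 ^ (n.-1 - j) * W.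
Definition gl i := @asg_of n (Pof i * 2 ^ j) (Qof n j (Pof i) (tof i) * 2 ^ j).

Lemma jn : j < n.
Proof. move: (hh_lt Hj3 Hjh) Hjh Hj3; rewrite /hh; lia. Qed.

Lemma pw1 : 2 ^ (j - 1) = 2 * 2 ^ (j - 2).
Proof. by rewrite -expnS; congr (2 ^ _); move: Hj3; lia. Qed.

Lemma pw2 : 2 ^ j = 2 * 2 ^ (j - 1).
Proof. by rewrite -expnS; congr (2 ^ _); move: Hj3; lia. Qed.

Lemma W_gt0 : 0 < W.
Proof.
rewrite /W; have : 2 ^ 1 <= 2 ^ (j - 2) by rewrite leq_exp2l //; move: Hj3; lia.
rewrite expn1; lia.
Qed.

Lemma tof_lt i : tof i < 2 ^ (j - 1).
Proof.
rewrite /tof pw1; have := ltn_pmod i W_gt0; rewrite /W.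
have := expn_gt0 2 (j - 2); lia.
Qed.

Lemma Pof_lt i : i < Kl -> Pof i < 2 ^ (n.-1 - j).
Proof. by rewrite /Pof ltn_divLR ?W_gt0. Qed.

Lemma comb_eq P Q x y : x < 2 ^ j -> y < 2 ^ j -> forall v,
  comb rk lev (@asg_of n (P * 2 ^ j) (Q * 2 ^ j)) (@asg_of n x y) v =
  @asg_of n (P * 2 ^ j + x) (Q * 2 ^ j + y) v.
Proof.
move=> Hx Hy [i|i]; rewrite /comb /lev /asg_of /interleaved_rank;
  [rewrite ltn_double | rewrite ltn_Sdouble];
  have Hi := ltn_ord i; have := jn;
  (case: ifP => H; [rewrite bit_hi //; move: H; lia | rewrite bit_lo //; move/negbT: H; lia]).
Qed.

Lemma fval i x y : i < Kl -> x < 2 ^ j -> y < 2 ^ j ->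
  f (comb rk lev (gl i) (@asg_of n x y)) = good n (Pof i * 2 ^ j + x) && (tof i <= x).
Proof.
move=> Hi Hx Hy.
have Ht : tof i < 2 ^ j by apply: leq_trans (tof_lt i) _; rewrite leq_exp2l //; lia.
have [H1 H2 H3] := val_lem Hj3 Hjh (Pof_lt Hi) Hx Hy Ht.
by rewrite (@chiE_ext (2 ^ n) n (aa n) (bb n) _ _ (comb_eq _ _ Hx Hy)) chiE_asg.
Qed.

Lemma even_good P x : ~~ odd x -> good n (P * 2 ^ j + x).
Proof.
move=> Hx; rewrite /good oddD oddM oddX /=.
have -> : (j == 0) = false by move: Hj3; lia.
by rewrite andbF /= (negbTE Hx).
Qed.

Lemma dep_ok i : i < Kl -> exists ga ga', (forall v, rk v != lev -> ga v = ga' v) /\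
        f (comb rk lev (gl i) ga) != f (comb rk lev (gl i) ga').
Proof.
move=> Hi; exists (@asg_of n 0 0), (@asg_of n (2 ^ (j - 1)) 0); split.
  move=> [k|k]; rewrite /asg_of /= ?bit0n // bit_pow /lev => H.
  apply/esym/negbTE; apply/eqP => Hk; move/eqP: H; apply; rewrite Hk.
  have := jn; lia.
have Hp : 2 ^ (j - 1) < 2 ^ j by rewrite ltn_exp2l //; lia.
rewrite !fval ?expn_gt0 //.
have -> : tof i <= 0 = false by rewrite /tof; lia.
rewrite [good _ (_ + 2 ^ (j - 1))]even_good; first by rewrite ?andbF ?andbT ?(ltnW (tof_lt i)).
by rewrite oddX orbF; apply/negP => /eqP; move: Hj3; lia.
Qed.

Definition bP P := P * 2 ^ (j - k0 n) + 2 ^ (j.-1 - k0 n).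

Lemma bP_eq P : bP P * 2 ^ k0 n = P * 2 ^ j + 2 ^ (j - 1).
Proof.
rewrite /bP mulnDl -mulnA -!expnD !subnK //; first by rewrite subn1.
  by move: Hjk; lia.
by move: Hjk; lia.
Qed.

Lemma fool_ok i1 i2 : i1 < Kl -> i2 < Kl -> i1 != i2 ->
  exists ga, f (comb rk lev (gl i1) ga) != f (comb rk lev (gl i2) ga).
Proof.
move=> H1 H2 Hne.
have HP1 := Pof_lt H1; have HP2 := Pof_lt H2.
have Hp : 2 ^ (j - 1) < 2 ^ j by rewrite ltn_exp2l //; lia.
have Hjk1 : 2 ^ k0 n <= 2 ^ (j - 1) by rewrite leq_exp2l //; lia.
case: (eqVneq (Pof i1) (Pof i2)) => HP.
- have Ht : tof i1 != tof i2.
    apply: contra Hne => /eqP Ht; apply/eqP.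
    rewrite (divn_eq i1 W) (divn_eq i2 W); rewrite /Pof in HP; rewrite HP.
    by move: Ht; rewrite /tof; lia.
  have Ht1 := tof_lt i1; have Ht2 := tof_lt i2.
  have Hev : forall i, ~~ odd (tof i) by move=> i; rewrite /tof oddD oddM.
  case: (ltngtP (tof i1) (tof i2)) => Hlt; last by rewrite Hlt eqxx in Ht.
  + exists (@asg_of n (tof i1) 0); rewrite !fval ?expn_gt0 //; try lia.
    by rewrite HP even_good // leqnn /= leqNgt Hlt.
  + exists (@asg_of n (tof i2) 0); rewrite !fval ?expn_gt0 //; try lia.
    by rewrite HP even_good // leqnn /= leqNgt Hlt.
- set b1 := bP (Pof i1); set b2 := bP (Pof i2).
  have Hb : b1 != b2.
    apply: contra HP => /eqP Hb; apply/eqP.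
    have : bP (Pof i1) * 2 ^ k0 n = bP (Pof i2) * 2 ^ k0 n by rewrite -/b1 -/b2 Hb.
    rewrite !bP_eq => /eqP; rewrite eqn_add2r eqn_pmul2r ?expn_gt0 // => /eqP //.
  have Hbn : forall P, P < 2 ^ (n.-1 - j) -> bP P < 2 ^ n.
    move=> P HPl; apply: leq_ltn_trans (leq_pmulr _ (expn_gt0 2 (k0 n))) _.
    rewrite bP_eq; by have [] := val_lem Hj3 Hjh HPl Hp (expn_gt0 2 j) (leq_ltn_trans (leqnn _) Hp).
  case/boolP: [exists k : 'I_n, bit b1 k != bit b2 k] => [/existsP [k Hk]|Hall]; last first.
    move/eqP: Hb; case; apply: (bits_eq (Hbn _ HP1) (Hbn _ HP2)) => k Hk.
    by apply/eqP; apply: contraNT Hall => Hne'; apply/existsP; exists (Ordinal Hk).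
  have Hkn := ltn_ord k.
  have Hx : 2 ^ (j - 1) + (2 * k + 1) < 2 ^ j by rewrite pw2; lia.
  exists (@asg_of n (2 ^ (j - 1) + (2 * k + 1)) 0); rewrite !fval ?expn_gt0 //.
  have Ht1 := tof_lt i1; have Ht2 := tof_lt i2.
  have -> : tof i1 <= 2 ^ (j - 1) + (2 * k + 1) = true by lia.
  have -> : tof i2 <= 2 ^ (j - 1) + (2 * k + 1) = true by lia.
  have Hgood : forall P, good n (P * 2 ^ j + (2 ^ (j - 1) + (2 * k + 1))) = bit (bP P) k.
    move=> P; rewrite addnA -bP_eq /good.
    have Hk2 : 2 * k + 1 < 2 ^ k0 n by lia.
    rewrite divnMDl ?expn_gt0 // modnMDl (divn_small Hk2) addn0 (modn_small Hk2).
    have -> : (2 * k + 1) %/ 2 = k by lia.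
    rewrite oddD oddM oddX /=.
    have -> : (k0 n == 0) = false by apply/negbTE; rewrite -lt0n; move: HM jn; case: (k0 n) => //=; rewrite expn0; lia.
    by rewrite andbF /= addn1 /= oddM.
  by rewrite !andbT !Hgood.
Qed.

End Level2.
Import Order.TTheory GRing.Theory Num.Theory.

Lemma Kl_bound n j : 3 <= j -> j < n -> 2 ^ n <= 16 * Kl n j.
Proof.
move=> Hj Hjn; rewrite /Kl /W.
have -> : 2 ^ n = 8 * (2 ^ (n.-1 - j) * 2 ^ (j - 2)).
  by rewrite -expnD -[8]/(2 ^ 3) -expnD; congr (2 ^ _); lia.
have H2 : 2 * 2 ^ (n.-1 - j) <= 2 ^ (j - 2) * 2 ^ (n.-1 - j).
  rewrite leq_mul2r; apply/orP; right; rewrite -[2]/(2 ^ 1) leq_exp2l //; lia.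
rewrite mulnBr muln1 [2 ^ (j - 2) * _]mulnC in H2 *.
set AB := 2 ^ (n.-1 - j) * 2 ^ (j - 2) in H2 *; set A := 2 ^ (n.-1 - j) in H2 *; lia.
Qed.

Lemma main_bound n (B : obdd n) : 24 <= n ->
  is_pi_obdd (@interleaved_rank n) B ->
  represents B (@chiE (2 ^ n) n (aa n) (bb n)) ->
  n * 2 ^ n <= 128 * osize B.
Proof.
move=> Hn HB Hrep.
set E := hh n - k0 n.
have HM : 2 * n <= 2 ^ k0 n.
  have := pow_ge (q := k0 n); rewrite /k0 => H; apply: leq_trans (H _); lia.
have Hk6 : 6 <= k0 n by rewrite /k0; lia.
have Hj : forall e, e < E -> [/\ 3 <= k0 n + 1 + e, k0 n + 1 + e <= hh n & k0 n < k0 n + 1 + e].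
  by move=> e He; rewrite /E in He; split; lia.
have Hsum := @generic_bound n (@interleaved_rank n) B HB _ Hrep E
  (fun e => lev n (k0 n + 1 + e)) (fun e => Kl n (k0 n + 1 + e)) (fun e => @gl n (k0 n + 1 + e)).
have Hhn : hh n < n by rewrite /hh; lia.
have {}Hsum : \sum_(e < E) Kl n (k0 n + 1 + e) <= osize B.
  apply: Hsum.
  - move=> e1 e2 He1 He2; rewrite /lev -!muln2 => Hq.
    have := Hj _ He1; have := Hj _ He2; move: Hq Hhn; lia.
  - move=> e i1 i2 He; have [? ? ?] := Hj _ He; exact: fool_ok.
  - move=> e i He; have [? ? ?] := Hj _ He; exact: dep_ok.
have H16 : E * 2 ^ n <= 16 * \sum_(e < E) Kl n (k0 n + 1 + e).
  rewrite big_distrr /= -[E in E * _]card_ord -sum_nat_const.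
  apply: leq_sum => e _; have [? ? ?] := Hj _ (ltn_ord e); apply: Kl_bound => //; lia.
have HE : n <= 8 * E by rewrite /E /hh /k0; lia.
have H8 : n * 2 ^ n <= 8 * (E * 2 ^ n) by rewrite mulnA leq_mul2r HE orbT.
apply: leq_trans H8 _; rewrite -[128]/(8 * 16) -mulnA leq_mul2l /=.
apply: leq_trans H16 _; by rewrite leq_mul2l Hsum orbT.
Qed.

Lemma up_log_pow k : 0 < k -> up_log 2 (2 ^ k) = k.
Proof.
case: k => // k _; apply: up_log_eq => //; rewrite leqnn andbT ltn_exp2l //.
Qed.

Local Open Scope ring_scope.

Theorem mainTheorem3 :
  exists (c : rat) (N0 : nat), 0 < c /\
    forall N : nat, (N0 <= N)%N -> (exists k, N = 2 ^ k)%N ->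
      exists a b : nat -> nat,
        interval_rep N a b /\
        forall B : obdd (up_log 2 N),
          is_pi_obdd (@interleaved_rank (up_log 2 N)) B ->
          represents B (chiE N a b) ->
          c * (N * up_log 2 N)%:R <= (osize B)%:R.
Proof.
exists (1 / 128), (2 ^ 24)%N; split; first by rewrite divr_gt0.
move=> N HN [k Hk]; subst N.
have Hk : (24 <= k)%N by move: HN; rewrite leq_exp2l.
rewrite up_log_pow; last by lia.
exists (aa k), (bb k); split; first exact: interval_rep_ok.
move=> B HB Hrep.
have H := main_bound Hk HB Hrep.
have H' : ((2 ^ k * k)%:R <= (128 * osize B)%:R :> rat).
  by rewrite ler_nat mulnC.
rewrite natrM in H'.
lra.
Qed.
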